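(* Let $\{x_k\}$ be generated by the IR-IG method with positive sequences $\{\gamma_k\}$, $\{\lambda_k\}$, and let $k\ge 1$ be such that $0<\gamma_k\lambda_k\mu_h\le 2m$. Then $$\|x_{k+1}-x_{\lambda_k}^*\|^2\le\left(1-\frac{\gamma_k\lambda_k\mu_h}{2m}\right)\|x_k-x_{\lambda_{k-1}}^*\|^2+\frac{3mC_h^2}{\gamma_k\lambda_k\mu_h^3}\left|1-\frac{\lambda_{k-1}}{\lambda_k}\right|^2+6m^2\gamma_k^2\left(C_f^2+\lambda_k^2C_h^2\right).$$
   Context: Standing setup: $X\subset\mathbb{R}^n$ is nonempty, compact and convex. $f_1,\dots,f_m:\mathbb{R}^n\to\mathbb{R}$ are convex (possibly nondifferentiable) functions and $f=\sum_{i=1}^m f_i$. $h:\mathbb{R}^n\to\mathbb{R}$ is strongly convex with parameter $\mu_h>0$ (possibly nondifferentiable), i.e. $h(y)\ge h(x)+g^T(y-x)+\frac{\mu_h}{2}\|y-x\|^2$ for all $x,y$ and all $g\in\partial h(x)$. For $\lambda>0$, $x_\lambda^*$ denotes the unique minimizer of $f+\lambda h$ over $X$. $C_f,C_h$ are constants such that $\|g\|\le C_f$ for every $g\in\partial f_i(x)$, $i=1,\dots,m$, $x\in X$, and $\|g\|\le C_h$ for every $g\in\partial h(x)$, $x\in X$. $\mathcal{P}_X$ denotes Euclidean projection onto $X$. IR-IG method: given $x_0\in X$ and positive sequences $\{\gamma_k\}$ (step sizes) and $\{\lambda_k\}$ (regularization parameters), for each $k\ge0$ set $x_{k,0}=x_k$;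 for $i=0,\dots,m-1$ pick any $g_{f_{i+1}}(x_{k,i})\in\partial f_{i+1}(x_{k,i})$ and $g_h(x_{k,i})\in\partial h(x_{k,i})$ and set $x_{k,i+1}=\mathcal{P}_X\big(x_{k,i}-\gamma_k\big(g_{f_{i+1}}(x_{k,i})+\tfrac{\lambda_k}{m}g_h(x_{k,i})\big)\big)$; then set $x_{k+1}=x_{k,m}$. *)

(* Defs.v *)
From Stdlib Require Import Reals.
From mathcomp Require Import ssreflect ssrfun ssrbool eqtype ssrnat seq fintype bigop.
Open Scope R_scope.

Definition vec (n : nat) := 'I_n -> R.

Definition vadd {n} (x y : vec n) : vec n := fun i => x i + y i.
Definition vsub {n} (x y : vec n) : vec n := fun i => x i - y i.
Definition vscale {n} (a : R) (x : vec n) : vec n := fun i => a * x i.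
Definition dot {n} (x y : vec n) : R := \big[Rplus/0]_(i < n) (x i * y i).
Definition norm2 {n} (x : vec n) : R := dot x x.
Definition norm {n} (x : vec n) : R := sqrt (norm2 x).

Definition convex_set {n} (X : vec n -> Prop) : Prop :=
  forall x y t, X x -> X y -> 0 <= t <= 1 ->
    X (vadd (vscale t x) (vscale (1 - t) y)).
Definition closed_set {n} (X : vec n -> Prop) : Prop :=
  forall (u : nat -> vec n) (x : vec n),
    (forall j, X (u j)) -> Un_cv (fun j => norm (vsub (u j) x)) 0 -> X x.
Definition bounded_set {n} (X : vec n -> Prop) : Prop :=
  exists M, forall x, X x -> norm x <= M.
(* Heine-Borel: compact in R^n = closed and bounded *)
Definition compact_set {n} (X : vec n -> Prop) : Prop :=
  closed_set X /\ bounded_set X.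

Definition convex_fun {n} (f : vec n -> R) : Prop :=
  forall x y t, 0 <= t <= 1 ->
    f (vadd (vscale t x) (vscale (1 - t) y)) <= t * f x + (1 - t) * f y.
Definition subgrad {n} (f : vec n -> R) (x g : vec n) : Prop :=
  forall y, f y >= f x + dot g (vsub y x).
Definition strongly_convex {n} (h : vec n -> R) (mu : R) : Prop :=
  convex_fun h /\
  forall x y g, subgrad h x g ->
    h y >= h x + dot g (vsub y x) + mu / 2 * norm2 (vsub y x).

Definition is_proj {n} (X : vec n -> Prop) (x p : vec n) : Prop :=
  X p /\ forall y, X y -> norm2 (vsub x p) <= norm2 (vsub x y).

Definition is_argmin {n} (X : vec n -> Prop) (F : vec n -> R) (xs : vec n) : Prop :=
  X xs /\ forall y, X y -> F xs <= F y.

(* f = sum_{i=1}^m f_i, with f_{i+1} represented as fs i, i < m *)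
Definition fsum {n} (m : nat) (fs : nat -> vec n -> R) : vec n -> R :=
  fun x => \big[Rplus/0]_(i < m) fs i x.

(* IR-IG iterates: xo k = x_k, z k i = x_{k,i} *)
Definition IRIG {n} (X : vec n -> Prop) (m : nat) (fs : nat -> vec n -> R)
  (h : vec n -> R) (gam lam : nat -> R) (xo : nat -> vec n)
  (z : nat -> nat -> vec n) : Prop :=
  X (xo 0%nat) /\
  forall k, z k 0%nat = xo k /\ xo (S k) = z k m /\
    forall i, (i < m)%nat ->
      exists gf gh, subgrad (fs i) (z k i) gf /\ subgrad h (z k i) gh /\
        is_proj X
          (vsub (z k i) (vscale (gam k)
             (vadd gf (vscale (lam k / INR m) gh))))
          (z k (S i)).

(* Main.v *)
From HB Require Import structures.
Require Import Defs.
From Stdlib Require Import Reals Lra Lia Psatz FunctionalExtensionality.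
From mathcomp Require Import ssreflect ssrfun ssrbool eqtype ssrnat seq fintype bigop.
Open Scope R_scope.
HB.instance Definition _ := Monoid.isComLaw.Build R 0 Rplus (fun a b c => esym (Rplus_assoc a b c)) Rplus_comm Rplus_0_l.

Section V.
Context {n : nat}.
Implicit Types x y w : vec n.

Lemma sum_scale (c : R) (F : 'I_n -> R) :
  \big[Rplus/0]_(i<n) (c * F i) = c * \big[Rplus/0]_(i<n) F i.
Proof.
apply: (big_ind2 (fun a b => a = c * b)); first ring.
  by move=> a1 a2 b1 b2 -> ->; ring.
done.
Qed.

Lemma dot_comm x y : dot x y = dot y x.
Proof. rewrite /dot; apply: eq_bigr => i _; ring. Qed.

Lemma dot_addl x y w : dot (vadd x y) w = dot x w + dot y w.
Proof. rewrite /dot -big_split; apply: eq_bigr => i _; rewrite /vadd /=; ring. Qed.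

Lemma dot_scalel c x w : dot (vscale c x) w = c * dot x w.
Proof. rewrite /dot -sum_scale; apply: eq_bigr => i _; rewrite /vscale; ring. Qed.

Lemma dot_subl x y w : dot (vsub x y) w = dot x w - dot y w.
Proof.
have -> : vsub x y = vadd x (vscale (-1) y).
  by apply: functional_extensionality => i; rewrite /vsub /vadd /vscale; ring.
rewrite dot_addl dot_scalel; ring.
Qed.

Lemma dot_addr x y w : dot w (vadd x y) = dot w x + dot w y.
Proof. by rewrite dot_comm dot_addl !(dot_comm w). Qed.
Lemma dot_scaler c x w : dot w (vscale c x) = c * dot w x.
Proof. by rewrite dot_comm dot_scalel !(dot_comm w). Qed.
Lemma dot_subr x y w : dot w (vsub x y) = dot w x - dot w y.
Proof. by rewrite dot_comm dot_subl !(dot_comm w). Qed.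

Lemma norm2_nonneg x : 0 <= norm2 x.
Proof.
rewrite /norm2 /dot; apply: (big_ind (fun a => 0 <= a)); first lra.
  by move=> a b; lra.
move=> i _; nra.
Qed.

Lemma norm2_add x y : norm2 (vadd x y) = norm2 x + 2 * dot x y + norm2 y.
Proof. rewrite /norm2 dot_addl !dot_addr (dot_comm y x); ring. Qed.
Lemma norm2_sub x y : norm2 (vsub x y) = norm2 x - 2 * dot x y + norm2 y.
Proof. rewrite /norm2 dot_subl !dot_subr (dot_comm y x); ring. Qed.
Lemma norm2_scale c x : norm2 (vscale c x) = c ^ 2 * norm2 x.
Proof. rewrite /norm2 dot_scalel dot_scaler; ring. Qed.

Lemma norm_nonneg x : 0 <= norm x.
Proof. exact: sqrt_pos. Qed.
Lemma norm_sq x : norm x ^ 2 = norm2 x.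
Proof. rewrite /norm /= Rmult_1_r sqrt_sqrt //; exact: norm2_nonneg. Qed.

Lemma discr (A B C : R) : 0 <= A -> 0 <= C ->
  (forall t, 0 <= A - 2 * t * B + t ^ 2 * C) -> B ^ 2 <= A * C.
Proof.
move=> hA hC H.
case: (Req_dec C 0) => hC0.
  case: (Req_dec B 0) => hB0; first by subst; nra.
  have := H ((A + 1) / (2 * B)); rewrite hC0.
  have -> : 2 * ((A + 1) / (2 * B)) * B = A + 1 by field.
  lra.
have := H (B / C).
have -> : A - 2 * (B / C) * B + (B / C) ^ 2 * C = A - B ^ 2 / C by field.
move=> h1.
have : B ^ 2 / C <= A by lra.
move=> h2.
have hCp : 0 < C by lra.
have := Rmult_le_compat_r C _ _ (Rlt_le _ _ hCp) h2.
have -> : B ^ 2 / C * C = B ^ 2 by field.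
lra.
Qed.

Lemma cs x y : Rabs (dot x y) <= norm x * norm y.
Proof.
have h : (dot x y) ^ 2 <= norm2 x * norm2 y.
  apply: discr; try exact: norm2_nonneg.
  move=> t.
  have := norm2_nonneg (vsub x (vscale t y)).
  rewrite norm2_sub norm2_scale dot_scaler /norm2; lra.
rewrite -!norm_sq in h.
have := norm_nonneg x; have := norm_nonneg y => ny nx.
have h' : Rsqr (dot x y) <= Rsqr (norm x * norm y) by rewrite /Rsqr; nra.
have := Rsqr_le_abs_0 _ _ h'.
rewrite (Rabs_pos_eq (norm x * norm y)) //; nra.
Qed.

Lemma cs_lo x y : - (norm x * norm y) <= dot x y.
Proof. move: (cs x y); rewrite /Rabs; case: Rcase_abs; lra. Qed.
Lemma cs_hi x y : dot x y <= norm x * norm y.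
Proof. move: (cs x y); rewrite /Rabs; case: Rcase_abs; lra. Qed.

Lemma sq_le (a b : R) : 0 <= a -> 0 <= b -> a ^ 2 <= b ^ 2 -> a <= b.
Proof. move=> ha hb h; nra. Qed.

Lemma norm_add x y : norm (vadd x y) <= norm x + norm y.
Proof.
apply: sq_le; try apply: norm_nonneg.
  have := norm_nonneg x; have := norm_nonneg y; lra.
rewrite norm_sq norm2_add -(norm_sq x) -(norm_sq y).
have := cs_hi x y; nra.
Qed.

Lemma norm_scale c x : norm (vscale c x) <= Rabs c * norm x.
Proof.
apply: sq_le; try apply: norm_nonneg.
  have := norm_nonneg x; have := Rabs_pos c; nra.
rewrite norm_sq norm2_scale -(norm_sq x).
have : c ^ 2 = Rabs c ^ 2 by rewrite -!Rsqr_pow2 Rsqr_abs.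
nra.
Qed.

Lemma lim0 (A C : R) : (forall t, 0 < t <= 1 -> A <= t * C) -> A <= 0.
Proof.
move=> H; apply: Rnot_lt_le => hA.
have h1 := H 1 ltac:(lra).
have hC : 0 < C by lra.
have ht : A / (2 * C) * (2 * C) = A by field; lra.
have tp : 0 < A / (2 * C) by apply: Rdiv_lt_0_compat; lra.
have := H (A / (2 * C)) ltac:(split; [lra | nra]).
nra.
Qed.

Lemma lim1 (A B : R) : (forall t, 0 < t <= 1 -> B * (1 - t) <= A) -> B <= A.
Proof.
move=> H; suff: B - A <= 0 by lra.
apply: (lim0 _ B) => t ht; have := H t ht; lra.
Qed.

Lemma proj_le (X : vec n -> Prop) u p y : convex_set X -> is_proj X u p -> X y ->
  norm2 (vsub p y) <= norm2 (vsub u y).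
Proof.
move=> cX [Xp Hp] Xy.
set w := vsub u p; set v := vsub y p.
have key : dot w v <= 0.
  apply: (lim0 _ (norm2 v / 2)) => t ht.
  have Xq := cX y p t Xy Xp ltac:(lra).
  have := Hp _ Xq.
  have -> : vsub u (vadd (vscale t y) (vscale (1 - t) p)) = vsub w (vscale t v).
    by apply: functional_extensionality => i; rewrite /w /v /vsub /vadd /vscale; ring.
  rewrite (norm2_sub w (vscale t v)) norm2_scale dot_scaler.
  move=> h.
  have ht0 := proj1 ht. change (norm2 w <= norm2 w - 2 * (t * dot w v) + t ^ 2 * norm2 v) in h. nra.
have -> : vsub u y = vsub w v.
  by apply: functional_extensionality => i; rewrite /w /v /vsub; ring.
have -> : vsub p y = vscale (-1) v.
  by apply: functional_extensionality => i; rewrite /v /vsub /vscale; ring.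
rewrite norm2_sub norm2_scale; have := norm2_nonneg w; lra.
Qed.

Definition Vj (j : nat) (v : vec n) := forall i : 'I_n, (j <= i)%N -> v i = 0.

Lemma dot_split x y (j0 : 'I_n) :
  dot x y = x j0 * y j0 + \big[Rplus/0]_(i < n | i != j0) (x i * y i).
Proof. by rewrite /dot (bigD1 j0). Qed.

Lemma subgrad_exists (f : vec n -> R) x0 : convex_fun f -> exists g, subgrad f x0 g.
Proof.
move=> cf.
suff H : forall j, (j <= n)%N -> exists g, (forall i : 'I_n, (j <= i)%N -> g i = 0) /\
  forall v, Vj j v -> f (vadd x0 v) >= f x0 + dot g v.
  have [g [_ Hg]] := H n (leqnn n).
  exists g => y.
  have Vy : Vj n (vsub y x0) by move=> i; rewrite leqNgt ltn_ord.
  have := Hg _ Vy.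
  have -> : vadd x0 (vsub y x0) = y.
    by apply: functional_extensionality => i; rewrite /vadd /vsub; ring.
  done.
elim=> [|j IH] hj.
  exists (fun _ => 0); split=> // v Vv.
  have -> : vadd x0 v = x0.
    by apply: functional_extensionality => i; rewrite /vadd Vv //; ring.
  rewrite /dot big1 /=; first lra.
  by move=> i _; ring.
have [g [g0 Hg]] := IH (ltnW hj).
pose j0 : 'I_n := Ordinal hj.
pose e : vec n := fun i => if i == j0 then 1 else 0.
pose q v := f (vadd x0 v) - f x0 - dot g v.
have q0 : forall v, Vj j v -> 0 <= q v by move=> v Vv; have := Hg v Vv; rewrite /q; lra.
have qc : forall a b t, 0 <= t <= 1 ->
    q (vadd (vscale t a) (vscale (1 - t) b)) <= t * q a + (1 - t) * q b.
  move=> a b t ht; rewrite /q.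
  have -> : vadd x0 (vadd (vscale t a) (vscale (1 - t) b)) =
     vadd (vscale t (vadd x0 a)) (vscale (1 - t) (vadd x0 b)).
    by apply: functional_extensionality => i; rewrite /vadd /vscale; ring.
  have := cf (vadd x0 a) (vadd x0 b) t ht.
  rewrite dot_addr !dot_scaler; lra.
have key : forall v w s t, Vj j v -> Vj j w -> 0 < s -> 0 < t ->
    - q (vsub v (vscale s e)) / s <= q (vadd w (vscale t e)) / t.
  move=> v w s t Vv Vw hs ht.
  set q1 := q (vsub v (vscale s e)); set q2 := q (vadd w (vscale t e)).
  have hc : 0 <= t / (s + t) <= 1.
    split; first by apply: Rlt_le; apply: Rdiv_lt_0_compat; lra.
    have : t / (s + t) * (s + t) = t by field; lra.
    have : 0 < t / (s + t) by apply: Rdiv_lt_0_compat; lra.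
    nra.
  have := qc (vsub v (vscale s e)) (vadd w (vscale t e)) _ hc.
  have Vc : Vj j (vadd (vscale (t / (s + t)) (vsub v (vscale s e)))
              (vscale (1 - t / (s + t)) (vadd w (vscale t e)))).
    move=> i hi; rewrite /vadd /vscale /vsub Vv // Vw // /e.
    case: (i == j0); field; lra.
  have := q0 _ Vc; rewrite -/q1 -/q2 => h1 h2.
  have h3 : 0 <= t / (s + t) * q1 + (1 - t / (s + t)) * q2 by lra.
  have -> : - q1 / s = q2 / t - (s + t) / (s * t) * (t / (s + t) * q1 + (1 - t / (s + t)) * q2).
    field; lra.
  have : 0 <= (s + t) / (s * t) by apply: Rlt_le; apply: Rdiv_lt_0_compat; nra.
  nra.
pose E c := exists v s, Vj j v /\ 0 < s /\ c = - q (vsub v (vscale s e)) / s.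
have V0 : Vj j (fun _ => 0) by [].
have Eb : bound E.
  exists (q (vadd (fun _ => 0) (vscale 1 e)) / 1) => c [v [s [Vv [hs ->]]]].
  move=> *; apply: key => //; lra.
have Ene : exists c, E c by exists (- q (vsub (fun _ => 0) (vscale 1 e)) / 1); exists (fun _ => 0), 1; split => //; split; [lra|done].
have [c [cub club]] := completeness E Eb Ene.
exists (fun i => if i == j0 then c else g i); split.
  move=> i hi; case: eqP => [hij|_]; last by apply: g0; exact: ltnW.
  by move: hi; rewrite hij /= ltnn.
move=> v Vv.
pose t := v j0.
pose v' : vec n := fun i => if i == j0 then 0 else v i.
have Vv' : Vj j v'.
  move=> i hi; rewrite /v'; case: eqP => // /eqP hij; apply: Vv.
  by rewrite ltn_neqAle hi andbT; apply: contra hij => /eqP hij; apply/eqP/val_inj.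
have ev : v = vadd v' (vscale t e).
  apply: functional_extensionality => i; rewrite /vadd /v' /vscale /e /t.
  by case: eqP => [->|_]; ring.
have dg : dot (fun i => if i == j0 then c else g i) v = c * t + dot g v.
  rewrite (dot_split _ _ j0) (dot_split g v j0) eqxx (g0 j0 (leqnn _)).
  rewrite (eq_bigr (fun i => g i * v i)); first by rewrite /t Rmult_0_l Rplus_0_l.
  by move=> i /negbTE ->.
rewrite dg.
suff : c * t <= q v by rewrite /q; lra.
rewrite ev.
case: (Rtotal_order t 0) => [tn|[t0|tp]].
- have -> : vadd v' (vscale t e) = vsub v' (vscale (- t) e).
    by apply: functional_extensionality => i; rewrite /vadd /vsub /vscale; ring.
  have : - q (vsub v' (vscale (- t) e)) / (- t) <= c.
    by apply: cub; exists v', (- t); split => //; split => //; lra.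
  move=> h.
  have : - q (vsub v' (vscale (- t) e)) / (- t) * (- t) = - q (vsub v' (vscale (- t) e)) by field; lra.
  nra.
- rewrite t0.
  have -> : vadd v' (vscale 0 e) = v'.
    by apply: functional_extensionality => i; rewrite /vadd /vscale; ring.
  have := q0 _ Vv'; lra.
- have : c <= q (vadd v' (vscale t e)) / t.
    by apply: club => b [w [s [Vw [hs ->]]]]; exact: key.
  move=> h.
  have : q (vadd v' (vscale t e)) / t * t = q (vadd v' (vscale t e)) by field; lra.
  nra.
Qed.

Lemma fsumS (m : nat) (fs : nat -> vec n -> R) x :
  fsum m.+1 fs x = fsum m fs x + fs m x.
Proof. by rewrite /fsum big_ord_recr. Qed.

Lemma fsum_convex (m : nat) (fs : nat -> vec n -> R) :
  (forall i, (i < m)%N -> convex_fun (fs i)) -> convex_fun (fsum m fs).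
Proof.
elim: m => [|m IH] H.
  move=> x y t ht; rewrite /fsum !big_ord0; lra.
move=> x y t ht; rewrite !fsumS.
have := IH (fun i hi => H i (ltnW hi)) x y t ht.
have := H m (ltnSn m) x y t ht.
lra.
Qed.

Lemma lip (f : vec n -> R) a b g C : subgrad f a g -> norm g <= C ->
  f b >= f a - C * norm (vsub b a).
Proof.
move=> hg hC; have := hg b; have := cs_lo g (vsub b a).
have := norm_nonneg (vsub b a); nra.
Qed.

Lemma sc_value (X : vec n -> Prop) (phi h : vec n -> R) (l mu : R) y z :
  convex_set X -> convex_fun phi -> strongly_convex h mu -> 0 < l ->
  is_argmin X (fun x => phi x + l * h x) y -> X z ->
  phi z + l * h z - (phi y + l * h y) >= l * mu / 2 * norm2 (vsub z y).
Proof.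
move=> cX cphi [ch sh] hl [Xy Hy] Xz.
apply: Rle_ge; apply: lim1 => t ht.
set yt := vadd (vscale t z) (vscale (1 - t) y).
have Xyt : X yt by apply: cX => //; lra.
have h1 := Hy _ Xyt.
have h2 := cphi z y t ltac:(lra).
have [g hg] := subgrad_exists h yt ch.
have s1 := sh yt y g hg; have s2 := sh yt z g hg.
rewrite (_ : vsub y yt = vscale (- t) (vsub z y)) in s1; last first.
  by apply: functional_extensionality => i; rewrite /yt /vsub /vadd /vscale; ring.
rewrite (_ : vsub z yt = vscale (1 - t) (vsub z y)) in s2; last first.
  by apply: functional_extensionality => i; rewrite /yt /vsub /vadd /vscale; ring.
rewrite dot_scaler norm2_scale in s1; rewrite dot_scaler norm2_scale in s2.
set N := norm2 (vsub z y) in s1 s2 *; set D := dot g (vsub z y) in s1 s2.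
have e1 : (1 - t) * h y >= (1 - t) * (h yt + - t * D + mu / 2 * ((- t) ^ 2 * N)).
  apply: Rmult_ge_compat_l; lra.
have e2 : t * h z >= t * (h yt + (1 - t) * D + mu / 2 * ((1 - t) ^ 2 * N)).
  apply: Rmult_ge_compat_l; lra.
have e3 : (1 - t) * h y + t * h z >= h yt + mu / 2 * (t * (1 - t)) * N by nra.
have e4 : l * ((1 - t) * h y + t * h z) >= l * (h yt + mu / 2 * (t * (1 - t)) * N).
  apply: Rmult_ge_compat_l; lra.
have e5 : t * (phi z + l * h z - (phi y + l * h y)) >= t * (l * mu / 2 * N * (1 - t)). { change (phi yt <= t * phi z + (1 - t) * phi y) in h2. lra. }
have ht0 : 0 < t by lra.
nra.
Qed.

Fixpoint psum (F : nat -> R) (j : nat) : R :=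
  match j with O => 0 | S j' => psum F j' + F j' end.

Lemma psumS F j : psum F j.+1 = psum F j + F j.
Proof. by []. Qed.

Lemma fsum_psum (m : nat) (fs : nat -> vec n -> R) x : fsum m fs x = psum (fun i => fs i x) m.
Proof. elim: m => [|m IH]; first by rewrite /fsum big_ord0. by rewrite fsumS IH. Qed.

Lemma psum_diff (F G : nat -> R) c c' j :
  psum (fun i => (F i + c) - (G i + c')) j = psum F j - psum G j + INR j * (c - c').
Proof.
elim: j => [|j IH]; first by rewrite /=; ring.
rewrite (psumS _ j) IH (psumS F j) (psumS G j) S_INR; ring.
Qed.

Lemma dot_swap (g a b : vec n) : dot g (vsub a b) = - dot (vsub b a) g.
Proof. rewrite dot_subr dot_subl !(dot_comm g); ring. Qed.
Lemma norm2_swap (a b : vec n) : norm2 (vsub a b) = norm2 (vsub b a).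
Proof. rewrite !norm2_sub (dot_comm a b); ring. Qed.
Lemma norm_swap (a b : vec n) : norm (vsub a b) = norm (vsub b a).
Proof. by rewrite /norm norm2_swap. Qed.
Lemma norm_self (a : vec n) : norm (vsub a a) = 0.
Proof. rewrite /norm norm2_sub /norm2 (_ : dot a a - 2 * dot a a + dot a a = 0); [exact: sqrt_0 | ring]. Qed.
End V.

Lemma final_alg (M gm lm lm' mu Cf Ch U W P dm : R) :
  1 <= M -> 0 < gm -> 0 < lm -> 0 < lm' -> 0 < mu -> gm * lm * mu <= 2 * M ->
  0 <= Cf -> 0 <= Ch -> 0 <= U -> 0 <= W -> 0 <= U + 2 * P + W ->
  (forall al be, 0 <= al ^ 2 * U - 2 * al * be * P + be ^ 2 * W) ->
  lm ^ 2 * mu ^ 2 * W <= 4 * (lm - lm') ^ 2 * Ch ^ 2 ->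
  dm <= (1 - gm * (lm / M) * mu) * (U + 2 * P + W) - 2 * gm * (lm * mu / 2 * (U + 2 * P + W))
        + M * (2 * gm * (Cf + lm / M * Ch) * (M * gm * (Cf + lm / M * Ch)) + gm ^ 2 * (Cf + lm / M * Ch) ^ 2) ->
  dm <= (1 - gm * lm * mu / (2 * M)) * U
    + 3 * M * Ch ^ 2 / (gm * lm * mu ^ 3) * (Rabs (1 - lm' / lm)) ^ 2
    + 6 * M ^ 2 * gm ^ 2 * (Cf ^ 2 + lm ^ 2 * Ch ^ 2).
Proof.
move=> hM hg hl hl' hmu hle hCf hCh hU hW hd0 young hshift hdm.
set L := Cf + lm / M * Ch in hdm.
set d0 := U + 2 * P + W in hd0 hdm.
have hM0 : 0 < M by lra.
have hlM : 0 <= lm / M by apply: Rlt_le; apply: Rdiv_lt_0_compat; lra.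
have hL0 : 0 <= L by rewrite /L; nra.
have hL2 : L ^ 2 <= 2 * Cf ^ 2 + 2 * lm ^ 2 * Ch ^ 2.
  have e : lm / M * Ch = (lm * Ch) / M by field; lra.
  have q : 0 <= lm * Ch by nra.
  have q2 : lm * Ch / M <= lm * Ch.
    apply: Rle_trans (_ : lm * Ch / 1 <= _); last lra.
    apply: Rmult_le_compat_l => //; apply: Rinv_le_contravar; lra.
  have q3 : 0 <= lm * Ch / M by apply: Rmult_le_pos => //; apply: Rlt_le; apply: Rinv_0_lt_compat.
  have q4 : (lm * Ch / M) ^ 2 <= lm ^ 2 * Ch ^ 2.
    have := Rmult_le_compat _ _ _ _ q3 q3 q2 q2.
    have -> : lm ^ 2 * Ch ^ 2 = (lm * Ch) * (lm * Ch) by ring.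
    by rewrite /= Rmult_1_r.
  have q5 := pow2_ge_0 (Cf - lm * Ch / M).
  rewrite /L e; nra.
have iE : M * (2 * gm * L * (M * gm * L) + gm ^ 2 * L ^ 2) <= 6 * M ^ 2 * gm ^ 2 * (Cf ^ 2 + lm ^ 2 * Ch ^ 2).
  have -> : M * (2 * gm * L * (M * gm * L) + gm ^ 2 * L ^ 2) = (2 * M ^ 2 + M) * gm ^ 2 * L ^ 2 by ring.
  have g2 : 0 <= gm ^ 2 by nra.
  have a1 : (2 * M ^ 2 + M) * gm ^ 2 * L ^ 2 <= (3 * M ^ 2) * gm ^ 2 * L ^ 2.
    apply: Rmult_le_compat_r; first nra. apply: Rmult_le_compat_r => //; nra.
  have a2 : (3 * M ^ 2) * gm ^ 2 * L ^ 2 <= (3 * M ^ 2) * gm ^ 2 * (2 * Cf ^ 2 + 2 * lm ^ 2 * Ch ^ 2).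
    apply: Rmult_le_compat_l => //; nra.
  lra.
set a := gm * lm * mu / (2 * M).
have hglm : 0 < gm * lm * mu by repeat apply: Rmult_lt_0_compat.
have ha : 0 < a by rewrite /a; apply: Rdiv_lt_0_compat; lra.
have ha1 : a <= 1 by rewrite /a; apply: (Rmult_le_reg_r (2 * M)); [lra | field_simplify; lra].
have eb : 1 - gm * (lm / M) * mu - gm * lm * mu = 1 - (2 * a + gm * lm * mu) by rewrite /a; field; lra.
set b := 2 * a + gm * lm * mu.
have hb : 4 * a <= b.
  rewrite /b.
  have : 2 * a <= gm * lm * mu by rewrite /a; apply: (Rmult_le_reg_r (2 * M)); [lra | field_simplify; nra].
  lra.
have ii : (1 - b) * d0 <= (1 - a) * U + W / (3 * a).
  have hW3 : 0 <= W / (3 * a) by apply: Rmult_le_pos => //; apply: Rlt_le; apply: Rinv_0_lt_compat; lra.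
  case: (Rle_lt_dec (1 - b) 0) => hc.
    have : (1 - b) * d0 <= 0 by nra.
    nra.
  have y := young (b - a) (1 - b).
  have key : (b - a) * ((1 - b) * d0) <= (b - a) * ((1 - a) * U + (1 - b) * (1 - a) / (b - a) * W).
    have -> : (b - a) * ((1 - a) * U + (1 - b) * (1 - a) / (b - a) * W) = (b - a) * (1 - a) * U + (1 - b) * (1 - a) * W by field; lra.
    rewrite /d0; nra.
  have k2 : (1 - b) * d0 <= (1 - a) * U + (1 - b) * (1 - a) / (b - a) * W.
    apply: (Rmult_le_reg_l (b - a)) => //; lra.
  have k3 : (1 - b) * (1 - a) / (b - a) <= 1 / (3 * a).
    apply: (Rmult_le_reg_r ((b - a) * (3 * a))); first nra.
    field_simplify; try lra. nra.
  have : (1 - b) * (1 - a) / (b - a) * W <= 1 / (3 * a) * W by apply: Rmult_le_compat_r.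
  rewrite /Rdiv Rmult_1_l in k3 *. lra.
have iii : W / (3 * a) <= 3 * M * Ch ^ 2 / (gm * lm * mu ^ 3) * (Rabs (1 - lm' / lm)) ^ 2.
  rewrite pow2_abs.
  have -> : (1 - lm' / lm) ^ 2 = (lm - lm') ^ 2 / lm ^ 2 by field; lra.
  have -> : W / (3 * a) = (2 * M) * (lm ^ 2 * mu ^ 2 * W) / (3 * gm * lm ^ 3 * mu ^ 3) by rewrite /a; field; repeat split; lra.
  have -> : 3 * M * Ch ^ 2 / (gm * lm * mu ^ 3) * ((lm - lm') ^ 2 / lm ^ 2) = (3 * M * (lm - lm') ^ 2 * Ch ^ 2) / (gm * lm ^ 3 * mu ^ 3) by field; lra.
  have den : 0 < gm * lm ^ 3 * mu ^ 3 by apply: Rmult_lt_0_compat; [apply: Rmult_lt_0_compat|]; try apply: pow_lt.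
  apply: (Rmult_le_reg_r (gm * lm ^ 3 * mu ^ 3)) => //.
  field_simplify; try lra.
  have s1 := Rmult_le_compat_l M _ _ (Rlt_le _ _ hM0) hshift.
  have s2 : 0 <= M * ((lm - lm') ^ 2 * Ch ^ 2) by apply: Rmult_le_pos; [lra | apply: Rmult_le_pos; apply: pow2_ge_0].
  lra.
have e2 : (1 - gm * (lm / M) * mu) * d0 - 2 * gm * (lm * mu / 2 * d0) = (1 - gm * (lm / M) * mu - gm * lm * mu) * d0 by field; lra.
rewrite eb in e2.
rewrite -/b in e2. lra.
Qed.

Theorem lemma2 (n m : nat) (X : vec n -> Prop) (fs : nat -> vec n -> R)
  (h : vec n -> R) (mu_h Cf Ch : R) (xstar : R -> vec n)
  (gam lam : nat -> R) (xo : nat -> vec n) (z : nat -> nat -> vec n) (k : nat) :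
  (0 < m)%nat ->
  (exists x, X x) -> compact_set X -> convex_set X ->
  (forall i, (i < m)%nat -> convex_fun (fs i)) ->
  0 < mu_h -> strongly_convex h mu_h ->
  (forall l, 0 < l -> is_argmin X (fun x => fsum m fs x + l * h x) (xstar l)) ->
  (forall i x g, (i < m)%nat -> X x -> subgrad (fs i) x g -> norm g <= Cf) ->
  (forall x g, X x -> subgrad h x g -> norm g <= Ch) ->
  (forall j, 0 < gam j) -> (forall j, 0 < lam j) ->
  IRIG X m fs h gam lam xo z ->
  (1 <= k)%nat ->
  0 < gam k * lam k * mu_h <= 2 * INR m ->
  norm2 (vsub (xo (S k)) (xstar (lam k))) <=
    (1 - gam k * lam k * mu_h / (2 * INR m)) *
      norm2 (vsub (xo k) (xstar (lam (k - 1)%nat)))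
    + 3 * INR m * Ch ^ 2 / (gam k * lam k * mu_h ^ 3)
      * (Rabs (1 - lam (k - 1)%nat / lam k)) ^ 2
    + 6 * (INR m) ^ 2 * (gam k) ^ 2 * (Cf ^ 2 + (lam k) ^ 2 * Ch ^ 2).
Proof.
move=> hm _ _ cX cfs hmu shh Hstar Hcf Hch hgam hlam [X0 HI] hk [hpos hle].
have hg := hgam k; have hl := hlam k; have hl' := hlam (k - 1)%nat.
have hM1 : 1 <= INR m by apply: (le_INR 1); apply/leP.
have [Xy _] := Hstar (lam k) hl.
have [Xy' _] := Hstar (lam (k - 1)%nat) hl'.
have [Hx0 [Hxm Hst]] := HI k.
have Xx0 : X (z k 0%nat).
  have [_ [e2 Hst']] := HI (k - 1)%nat.
  rewrite Hx0 (_ : k = (k - 1).+1)%N; last by rewrite subn1 prednK.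
  rewrite e2.
  have hm1 : (m - 1 < m)%N by rewrite subn1 ltn_predL.
  have [gf [gh [_ [_ [hp _]]]]] := Hst' (m - 1)%N hm1.
  by move: hp; rewrite (subn1 m) prednK.
have Xx : forall i, (i <= m)%N -> X (z k i).
  case=> [|i] hi //.
  by have [gf [gh [_ [_ [hp _]]]]] := Hst i hi.
set (gm := gam k) in *; set (lm := lam k) in *; set (lm' := lam (k - 1)%nat) in *; set (M := INR m) in *.
set (y := xstar lm) in *; set (y' := xstar lm') in *.
set (x := z k) in *.
have [Cf0 Ch0] : 0 <= Cf /\ 0 <= Ch.
  have [gf [gh [s1 [s2 _]]]] := Hst 0%N hm.
  have := Hcf 0%N _ _ hm Xx0 s1; have := Hch _ _ Xx0 s2.
  have := norm_nonneg gf; have := norm_nonneg gh; lra.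
set L := Cf + lm / M * Ch.
have hlM : 0 < lm / M by apply: Rdiv_lt_0_compat; lra.
have hL : 0 <= L by have := Rmult_le_pos _ _ (Rlt_le _ _ hlM) Ch0; rewrite /L; lra.
have step : forall i, (i < m)%N -> exists G : vec n, norm G <= L /\
   norm2 (vsub (x i.+1) y) <= norm2 (vsub (x i) y) - 2 * gm * dot (vsub (x i) y) G + gm ^ 2 * norm2 G /\
   norm (vsub (x i.+1) (x i)) <= gm * L /\
   dot (vsub (x i) y) G >= fs i (x i) - fs i y + lm / M * (h (x i) - h y + mu_h / 2 * norm2 (vsub (x i) y)).
  move=> i hi.
  have [gf [gh [sf [sh hp]]]] := Hst i hi.
  have Xi := Xx i (ltnW hi).
  exists (vadd gf (vscale (lm / M) gh)).
  have nG : norm (vadd gf (vscale (lm / M) gh)) <= L.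
    have := norm_add gf (vscale (lm / M) gh); have := norm_scale (lm / M) gh.
    rewrite Rabs_pos_eq; last lra.
    have := Hcf _ _ _ hi Xi sf; have := Hch _ _ Xi sh.
    have := Rmult_le_compat_l (lm / M) _ _ (Rlt_le _ _ hlM) (Hch _ _ Xi sh).
    rewrite /L; lra.
  split => //; split.
    have := proj_le _ _ _ _ cX hp Xy.
    rewrite (_ : vsub (vsub (x i) (vscale gm (vadd gf (vscale (lm / M) gh)))) y =
       vsub (vsub (x i) y) (vscale gm (vadd gf (vscale (lm / M) gh)))); last first.
      by apply: functional_extensionality => j; rewrite /vsub /vscale; ring.
    rewrite (norm2_sub (vsub (x i) y)) norm2_scale dot_scaler; lra.
  split.
    have := proj_le _ _ _ _ cX hp Xi.
    rewrite (_ : vsub (vsub (x i) (vscale gm (vadd gf (vscale (lm / M) gh)))) (x i) =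
       vscale (- gm) (vadd gf (vscale (lm / M) gh))); last first.
      by apply: functional_extensionality => j; rewrite /vsub /vscale; ring.
    rewrite norm2_scale -!norm_sq => hh.
    apply: sq_le; [exact: norm_nonneg | nra |].
    have := norm_nonneg (vadd gf (vscale (lm / M) gh)) => nn.
    have : norm (vadd gf (vscale (lm / M) gh)) ^ 2 <= L ^ 2 by nra.
    move=> h3; have : (- gm) ^ 2 = gm ^ 2 by ring.
    move=> h4; rewrite h4 in hh; have := Rmult_le_compat_l (gm ^ 2) _ _ (pow2_ge_0 gm) h3; nra.
  rewrite dot_addr dot_scaler.
  have H1 := (proj2 shh) (x i) y gh sh.
  rewrite dot_swap (norm2_swap y (x i)) in H1.
  have H2 := sf y; rewrite dot_swap in H2.
  have : lm / M * (h (x i) - h y + mu_h / 2 * norm2 (vsub (x i) y)) <= lm / M * dot (vsub (x i) y) gh.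
    apply: Rmult_le_compat_l; lra.
  lra.
have rb : forall i, (i <= m)%N -> norm (vsub (x i) (x 0%N)) <= INR i * gm * L.
  elim=> [|i IH] hi.
    rewrite norm_self /=; lra.
  have [G [_ [_ [hmv _]]]] := step i hi.
  rewrite (_ : vsub (x i.+1) (x 0%N) = vadd (vsub (x i.+1) (x i)) (vsub (x i) (x 0%N))); last first.
    by apply: functional_extensionality => j; rewrite /vsub /vadd; ring.
  have := norm_add (vsub (x i.+1) (x i)) (vsub (x i) (x 0%N)).
  have := IH (ltnW hi). rewrite S_INR. lra.
have rbM : forall i, (i <= m)%N -> norm (vsub (x i) (x 0%N)) <= M * gm * L.
  move=> i hi; have := rb i hi.
  have : INR i <= M by apply: le_INR; apply/leP.
  have := Rmult_le_pos _ _ (Rlt_le _ _ hg) hL.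
  nra.
set E := 2 * gm * L * (M * gm * L) + gm ^ 2 * L ^ 2.
have [ph hph] := subgrad_exists h (x 0%N) (proj1 shh).
have nph := Hch _ _ Xx0 hph.
have cstep : forall i, (i < m)%N ->
  norm2 (vsub (x i.+1) y) <= norm2 (vsub (x i) y)
    - 2 * gm * ((fs i (x 0%N) + lm / M * h (x 0%N)) - (fs i y + lm / M * h y))
    - gm * (lm / M) * mu_h * norm2 (vsub (x i) y) + E.
  move=> i hi.
  have [G [nG [s1 [_ s4]]]] := step i hi.
  have [pf hpf] := subgrad_exists (fs i) (x 0%N) (cfs i hi).
  have npf := Hcf _ _ _ hi Xx0 hpf.
  have lf := lip _ _ (x i) _ _ hpf npf.
  have lh := lip _ _ (x i) _ _ hph nph.
  have r := rbM i (ltnW hi).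
  set rr := norm (vsub (x i) (x 0%N)) in lf lh r.
  set d := norm2 (vsub (x i) y) in s1 s4 *.
  set D := dot (vsub (x i) y) G in s1 s4.
  have rr0 : 0 <= rr by exact: norm_nonneg.
  have p1 : lm / M * (h (x 0%N) - Ch * rr) <= lm / M * h (x i).
    apply: Rmult_le_compat_l; lra.
  have p2 : D >= fs i (x 0%N) + lm / M * h (x 0%N) - (fs i y + lm / M * h y) - L * rr + lm / M * mu_h / 2 * d.
    rewrite /L; lra.
  have p3 : L * rr <= L * (M * gm * L) by apply: Rmult_le_compat_l.
  have p4 : 2 * gm * (fs i (x 0%N) + lm / M * h (x 0%N) - (fs i y + lm / M * h y) - L * rr + lm / M * mu_h / 2 * d) <= 2 * gm * D.
    apply: Rmult_le_compat_l; lra.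
  have p5 : norm2 G <= L ^ 2.
    rewrite -norm_sq; have := norm_nonneg G; nra.
  have p6 : gm ^ 2 * norm2 G <= gm ^ 2 * L ^ 2 by apply: Rmult_le_compat_l => //; nra.
  have p7 : 2 * gm * (L * rr) <= 2 * gm * (L * (M * gm * L)) by apply: Rmult_le_compat_l; lra.
  rewrite /E; lra.
set Phi := fun i => (fs i (x 0%N) + lm / M * h (x 0%N)) - (fs i y + lm / M * h y).
have sumP : forall j, (j < m)%N -> norm2 (vsub (x j.+1) y) <=
    (1 - gm * (lm / M) * mu_h) * norm2 (vsub (x 0%N) y) - 2 * gm * psum Phi j.+1 + INR j.+1 * E.
  elim=> [|j IH] hj.
    have := cstep 0%N hj; rewrite psumS /= /Phi; lra.
  have := IH (ltnW hj); have := cstep j.+1 hj.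
  have : 0 <= gm * (lm / M) * mu_h * norm2 (vsub (x j.+1) y).
    apply: Rmult_le_pos; last exact: norm2_nonneg.
    apply: Rmult_le_pos; last lra. apply: Rmult_le_pos; lra.
  rewrite (psumS _ j.+1) (S_INR j.+1) /Phi; lra.
have hmm : m = (m.-1).+1 by rewrite prednK.
have Sm := sumP m.-1 (ltac:(by rewrite ltn_predL)).
rewrite -hmm in Sm.
have ePhi : psum Phi m = (fsum m fs (x 0%N) + lm * h (x 0%N)) - (fsum m fs y + lm * h y).
  rewrite /Phi (psum_diff (fun i => fs i (x 0%N)) (fun i => fs i y) (lm / M * h (x 0%N)) (lm / M * h y)) !fsum_psum; rewrite -/M; field; lra.
have sv := sc_value X (fsum m fs) h lm mu_h y (x 0%N) cX (fsum_convex m fs cfs) shh hl (Hstar lm hl) Xx0.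
have fconv := fsum_convex m fs cfs.
have sv1 := sc_value X (fsum m fs) h lm mu_h y y' cX fconv shh hl (Hstar lm hl) Xy'.
have sv2 := sc_value X (fsum m fs) h lm' mu_h y' y cX fconv shh hl' (Hstar lm' hl') Xy.
have [gy hgy] := subgrad_exists h y (proj1 shh).
have [gy' hgy'] := subgrad_exists h y' (proj1 shh).
have l1 := lip _ _ y' _ _ hgy (Hch _ _ Xy hgy).
have l2 := lip _ _ y _ _ hgy' (Hch _ _ Xy' hgy').
rewrite norm_swap in l2; rewrite norm2_swap in sv2.
have hw0 := norm_nonneg (vsub y' y).
have hWw := norm_sq (vsub y' y).
set w := norm (vsub y' y) in l1 l2 hw0 hWw.
set W := norm2 (vsub y' y) in sv1 sv2 hWw.
have hs1 : (lm - lm') * (h y' - h y) >= (lm + lm') * mu_h / 2 * W by lra.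
have hs2 : (lm - lm') * (h y' - h y) <= Rabs (lm - lm') * (Ch * w).
  apply: Rle_trans (Rle_abs _) _; rewrite Rabs_mult.
  apply: Rmult_le_compat_l; first exact: Rabs_pos.
  apply: Rabs_le; lra.
have hA : (lm + lm') * mu_h / 2 * w <= Rabs (lm - lm') * Ch.
  case: (Req_dec w 0) => hw.
    rewrite hw Rmult_0_r; apply: Rmult_le_pos => //; exact: Rabs_pos.
  have wp : 0 < w by lra.
  apply: (Rmult_le_reg_r w) => //.
  rewrite -hWw in hs1; nra.
have hshift : lm ^ 2 * mu_h ^ 2 * W <= 4 * (lm - lm') ^ 2 * Ch ^ 2.
  have a1 : 0 <= lm * mu_h * w by apply: Rmult_le_pos => //; apply: Rmult_le_pos; lra.
  have a2 : lm * mu_h * w <= 2 * (Rabs (lm - lm') * Ch).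
    have : lm * mu_h * w <= (lm + lm') * mu_h * w.
      apply: Rmult_le_compat_r => //; apply: Rmult_le_compat_r; lra.
    lra.
  have a3 := Rmult_le_compat _ _ _ _ a1 a1 a2 a2.
  rewrite -hWw -(pow2_abs (lm - lm')); nra.
rewrite Hxm -Hx0.
have ed : vsub (x 0%N) y = vadd (vsub (x 0%N) y') (vsub y' y).
  by apply: functional_extensionality => j; rewrite /vsub /vadd; ring.
rewrite ed norm2_add -/W in Sm sv.
apply: (final_alg M gm lm lm' mu_h Cf Ch (norm2 (vsub (x 0%N) y')) W (dot (vsub (x 0%N) y') (vsub y' y))) => //;
  try lra.
- exact: norm2_nonneg.
- by rewrite /W; exact: norm2_nonneg.
- rewrite -norm2_add; exact: norm2_nonneg.
- move=> al be; have := norm2_nonneg (vsub (vscale al (vsub (x 0%N) y')) (vscale be (vsub y' y))).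
  rewrite norm2_sub !norm2_scale dot_scalel dot_scaler -/W; lra.
- move: Sm; rewrite ePhi /E.
  set d0 := norm2 (vsub (x 0%N) y') + 2 * dot (vsub (x 0%N) y') (vsub y' y) + W in sv *.
  have : 2 * gm * (lm * mu_h / 2 * d0) <= 2 * gm * (fsum m fs (x 0%N) + lm * h (x 0%N) - (fsum m fs y + lm * h y)).
    apply: Rmult_le_compat_l; lra.
  rewrite -/M => H1 H2; rewrite /L in H2; lra.
Qed.
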